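(* Let $S$ and $T$ be linear relations between two vector spaces $\mathcal{H}$ and $\mathcal{K}$ (i.e. linear subspaces of $\mathcal{H}\times\mathcal{K}$). Then the following three statements are equivalent: (i) $S\subset T$; (ii) $\ker S\subset \ker T$ and $\operatorname{ran} S\subset \operatorname{ran}(S\cap T)$; (iii) $\operatorname{ran} S\subset \operatorname{ran} T$ and $\ker(S\vee T)\subset \ker T$.
   Context: For a linear relation $R\subset \mathcal{H}\times\mathcal{K}$: $\operatorname{ran} R=\{k:(h,k)\in R \text{ for some } h\}$ and $\ker R=\{h:(h,0)\in R\}$. $S\cap T$ is the set-theoretic intersection of the subspaces $S,T$ (again a linear relation), and $S\vee T$ denotes the linear span of $S\cup T$ in $\mathcal{H}\times\mathcal{K}$. *)

(* Defs.v *)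
From HB Require Import structures.
From mathcomp Require Import all_boot all_order all_algebra.
Set Implicit Arguments. Unset Strict Implicit. Unset Printing Implicit Defensive.
Import GRing.Theory.
Local Open Scope ring_scope.

Definition rel_ (F : fieldType) (H K : lmodType F) := H -> K -> Prop.

Definition is_linrel (F : fieldType) (H K : lmodType F) (R : rel_ H K) : Prop :=
  [/\ R 0 0,
      (forall h k h' k', R h k -> R h' k' -> R (h + h') (k + k')) &
      (forall (a : F) h k, R h k -> R (a *: h) (a *: k))].

Definition rsub (F : fieldType) (H K : lmodType F) (S T : rel_ H K) : Prop :=
  forall h k, S h k -> T h k.

Definition ran (F : fieldType) (H K : lmodType F) (R : rel_ H K) : K -> Prop :=
  fun k => exists h, R h k.

Definition ker (F : fieldType) (H K : lmodType F) (R : rel_ H K) : H -> Prop :=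
  fun h => R h 0.

Definition psub (T : Type) (A B : T -> Prop) : Prop := forall x, A x -> B x.

Definition rcap (F : fieldType) (H K : lmodType F) (S T : rel_ H K) : rel_ H K :=
  fun h k => S h k /\ T h k.

(* linear span of S ∪ T: the smallest linear relation containing S and T *)
Definition rvee (F : fieldType) (H K : lmodType F) (S T : rel_ H K) : rel_ H K :=
  fun h k => forall U : rel_ H K, is_linrel U -> rsub S U -> rsub T U -> U h k.

(* Main.v *)
Require Import Defs.
From mathcomp Require Import all_boot all_order all_algebra.
Import GRing.Theory.
Local Open Scope ring_scope.

Lemma linrel_sub (F : fieldType) (H K : lmodType F) (R : rel_ H K) :
  is_linrel R -> forall h k h' k', R h k -> R h' k' -> R (h - h') (k - k').
Proof.
case=> _ hD hZ h k h' k' r r'.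
have := hZ (-1) _ _ r'; rewrite !scaleN1r => r''.
exact: hD.
Qed.

Theorem proposition3p1 (F : fieldType) (H K : lmodType F) (S T : rel_ H K)
    (hS : is_linrel S) (hT : is_linrel T) :
  (rsub S T <-> psub (ker S) (ker T) /\ psub (ran S) (ran (rcap S T))) /\
  (rsub S T <-> psub (ran S) (ran T) /\ psub (ker (rvee S T)) (ker T)).
Proof.
have hTD := hT; case: hTD => _ TD _.
split; split.
- move=> st; split; first by move=> h; apply: st.
  by move=> k [h sk]; exists h; split=> //; apply: st.
- case=> kk rr h k sk.
  have [h' [s' t']] := rr k (ex_intro _ h sk).
  have hk : ker S (h - h') by rewrite /ker -(subrr k); apply: linrel_sub.
  have := TD _ _ _ _ (kk _ hk) t'.
  by rewrite subrK add0r.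
- move=> st; split; first by move=> k [h sk]; exists h; apply: st.
  by move=> h v; apply: v.
- case=> rr kk h k sk.
  have [h' t'] := rr k (ex_intro _ h sk).
  have hk : ker (rvee S T) (h - h').
    move=> U hU sU tU; rewrite -(subrr k); apply: linrel_sub => //.
    + exact: sU.
    + exact: tU.
  have := TD _ _ _ _ (kk _ hk) t'.
  by rewrite subrK add0r.
Qed.
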